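(* Let $T$ be a perfect binary tree with nonnegative node weights $(x_v)$, let $1\le k\le K$ be integers, $\epsilon>0$, and fix a level $\ell$ of $T$ containing at least $M=\lceil(1+\epsilon)K/\epsilon\rceil$ nodes. For each node $v$ let $T_v$ be the set of descendants of $v$ (including $v$) and $u_v=\sum_{w\in T_v}x_w$. Let $u$ be the $M$-th largest value among $\{u_v: v \text{ at level }\ell\}$ (with multiplicity), let $D=\{v \text{ at level } \ell: u_v<u\}$ and $Z=\bigcup_{v\in D}T_v$. Let $\mathrm{OPT}=\min_{\Omega\in\mathbb{T}_k}\sum_{w\notin\Omega}x_w$ and $\check{\mathrm{OPT}}=\min\{\sum_{w\notin\Omega}x_w:\Omega\in\mathbb{T}_k,\ \Omega\cap Z=\emptyset\}$. Then $\check{\mathrm{OPT}}\le(1+\epsilon)\mathrm{OPT}$.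
   Context: $\mathbb{T}_k$ denotes the family of node sets $\Omega\subseteq T$ that contain the root, are closed under taking parents, and satisfy $|\Omega|\le k$. The level of a node is counted from the leaves (leaves are at level 1); all nodes at a given level have the same number of descendants. *)

(* Defs.v *)
From HB Require Import structures.
From mathcomp Require Import all_boot all_order all_algebra.
Set Implicit Arguments. Unset Strict Implicit. Unset Printing Implicit Defensive.
Import Order.TTheory GRing.Theory Num.Theory.
Local Open Scope ring_scope.

(* A node is encoded by the path from
   the root, written as a list of bools with the LAST step FIRST: the root
   is [::], the children of [s] are [true :: s] and [false :: s], hence the
   parent of [b :: s] is [s], and [w] is a descendant of [v] iff [val v] is
   a suffix of [val w]. *)
Fixpoint words (n : nat) : seq (seq bool) :=
  if n is n'.+1 then [seq b :: w | b <- [:: true; false], w <- words n']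
  else [:: [::]].

Definition tree_nodes (d : nat) : seq (seq bool) :=
  flatten [seq words i | i <- iota 0 d].

Definition node (d : nat) := seq_sub (tree_nodes d).

(* level counted from the leaves: leaves (depth d-1) are at level 1 *)
Definition level d (v : node d) : nat := (d - size (val v))%N.

Definition is_root d (v : node d) : bool := val v == [::].

Definition desc d (v w : node d) : bool := suffix (val v) (val w).

Definition is_parent d (p c : node d) : bool := [exists b : bool, val c == b :: val p].

Definition inTk d (k : nat) (Om : {set node d}) : bool :=
  [&& [forall r, is_root r ==> (r \in Om)],
      [forall c, forall p, (is_parent p c && (c \in Om)) ==> (p \in Om)]
    & (#|Om| <= k)%N].

Section Weights.
Variables (R : realFieldType) (d : nat) (x : node d -> R).

Definition subtree_weight (v : node d) : R := \sum_(w | desc v w) x w.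

Definition cost (Om : {set node d}) : R := \sum_(w | w \notin Om) x w.

Definition total_weight : R := \sum_w x w.

(* minimum of cost over T_k; the neutral element total_weight is >= every
   cost (weights are nonnegative) so this is the true minimum whenever the
   family is nonempty *)
Definition OPT (k : nat) : R :=
  \big[Num.min/total_weight]_(Om : {set node d} | inTk k Om) cost Om.

Definition OPTcheck (k : nat) (Z : {set node d}) : R :=
  \big[Num.min/total_weight]_(Om : {set node d} | inTk k Om && [disjoint Om & Z]) cost Om.

Definition mth_largest_at_level (l m : nat) : R :=
  nth 0 (sort >=%R [seq subtree_weight v | v <- enum [set v | level v == l]]) m.-1.

Definition Dset (l m : nat) : {set node d} :=
  [set v | (level v == l) && (subtree_weight v < mth_largest_at_level l m)].

Definition Zset (l m : nat) : {set node d} :=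
  [set w | [exists v in Dset l m, desc v w]].

End Weights.

(* Main.v *)
Require Import Defs.
From HB Require Import structures.
From mathcomp Require Import all_boot all_order all_algebra zify ring lra.
Import Order.TTheory GRing.Theory Num.Theory.
Set Implicit Arguments. Unset Strict Implicit.
Local Open Scope ring_scope.


Lemma words_mem n (s : seq bool) : (s \in words n) = (size s == n).
Proof.
elim: n s => [|n IH] [|b t] //=.
  by rewrite cats0 mem_cat; apply/negbTE/negP; case/orP => /mapP [].
rewrite cats0 mem_cat; apply/orP/idP.
  case=> /mapP [w Hw E]; case: E => _ ->; by rewrite eqSS -IH.
rewrite eqSS -IH => Ht; case: b; [left|right]; exact: map_f.
Qed.

Lemma tree_mem d (s : seq bool) : (s \in tree_nodes d) = (size s < d)%N.
Proof.
apply/flatten_mapP/idP.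
  by case=> i; rewrite mem_iota words_mem add0n => /andP[_ Hi] /eqP ->.
move=> H; exists (size s); first by rewrite mem_iota.
by rewrite words_mem.
Qed.

Lemma node_size d (v : node d) : (size (val v) < d)%N.
Proof. by rewrite -tree_mem; apply: ssvalP. Qed.

Definition pclosed d (Om : {set node d}) :=
  forall c p : node d, is_parent p c -> c \in Om -> p \in Om.

Lemma anc_closed d (Om : {set node d}) : pclosed Om ->
  forall v w, w \in Om -> desc v w -> v \in Om.
Proof.
rewrite /pclosed => HO v w Hw /suffixP [p Ep].
elim: p w Hw Ep => [|b p IH] w Hw Ep.
  by have -> : v = w by apply: val_inj; rewrite Ep.
have Ht : p ++ val v \in tree_nodes d.
  rewrite tree_mem; have := node_size w; rewrite Ep /=; lia.
apply: (IH (SeqSub Ht)) => //.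
apply: (HO w) => //; apply/existsP; exists b; by rewrite Ep.
Qed.

Lemma level_size d l (v : node d) : (1 <= l)%N -> level v = l -> size (val v) = (d - l)%N.
Proof. move=> H1; rewrite /level => E; have := node_size v; lia. Qed.

Lemma same_level_anc d (v v' w : node d) : level v = level v' ->
  desc v w -> desc v' w -> v = v'.
Proof.
rewrite /level /desc => El /suffixP [p Ep] /suffixP [p' Ep'].
have := node_size v; have := node_size v' => h1 h2.
have Es : size (val v) = size (val v') by lia.
apply: val_inj.
have Hp : size p = size p' by have := congr1 size Ep; rewrite Ep' !size_cat; lia.
have E1 : drop (size p) (val w) = val v by rewrite Ep drop_size_cat.
have E2 : drop (size p) (val w) = val v' by rewrite Ep' (drop_size_cat _ (esym Hp)).
by rewrite -E1 -E2.
Qed.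

Lemma desc_parent d (v p c : node d) : is_parent p c -> desc v p -> desc v c.
Proof.
move=> /existsP [b /eqP E] /suffixP [q Eq]; apply/suffixP; exists (b :: q).
by rewrite E Eq.
Qed.

Section Main.
Variables (R : archiRealFieldType) (d : nat) (x : node d -> R).
Hypothesis hx : forall v, 0 <= x v.

Lemma sw_ge0 v : 0 <= subtree_weight x v.
Proof. by apply: sumr_ge0 => w _; apply: hx. Qed.

Lemma swap_sum (A : {pred node d}) (F : node d -> R) :
  \sum_(v in A) \sum_(w | desc v w) F w = \sum_w \sum_(v in A | desc v w) F w.
Proof. exact: (exchange_big_dep predT). Qed.

Lemma key k (eps : R) M l (heps : 0 < eps) (hMe : (1+eps) * k%:R <= eps * M%:R)
  (hl1 : (1 <= l)%N) (hld : (l < d)%N) (hM1 : (1 <= M)%N)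
  (hlM : (M <= #|[set v : node d | level v == l]|)%N)
  (Om : {set node d}) (HOm : inTk k Om) :
  OPTcheck x k (Zset x l M) <= (1 + eps) * cost x Om.
Proof.
set u := mth_largest_at_level x l M.
set D := Dset x l M. set Z := Zset x l M.
set sw := subtree_weight x.
set Lev := [set v : node d | level v == l].
set H := [set v : node d | (level v == l) && (u <= sw v)].
case/and3P: HOm => /forallP Hroot /forallP Hpar Hcard.
have HO : pclosed Om.
  move=> c p Hp Hc; have := Hpar c => /forallP /(_ p) /implyP; apply.
  by rewrite Hp Hc.
set Om' := Om :\: Z.
have HOm' : inTk k Om' && [disjoint Om' & Z].
  apply/andP; split; last first.
    by rewrite disjoint_subset; apply/subsetP => w; rewrite in_setD => /andP [h _].
  apply/and3P; split.
  - apply/forallP => r; apply/implyP => Hr; rewrite in_setD (implyP (Hroot r) Hr) andbT.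
    apply/negP; rewrite inE => /existsP [v /andP [HvD Hvr]].
    move: Hvr; rewrite /desc (eqP Hr) suffixs0 => /eqP Ev.
    move: HvD; rewrite inE => /andP [/eqP Hl _].
    move: Hl; rewrite /level Ev /=; lia.
  - apply/forallP => c; apply/forallP => p; apply/implyP => /andP [Hp].
    rewrite !in_setD => /andP [HcZ HcO].
    rewrite (HO c p Hp HcO) andbT; apply: contra HcZ.
    rewrite !inE => /existsP [v /andP [HvD Hvp]].
    apply/existsP; exists v; rewrite HvD; exact: desc_parent Hp Hvp.
  - apply: leq_trans Hcard; apply: subset_leq_card; apply: subsetDl.
have Hle1 : OPTcheck x k Z <= cost x Om'.
  rewrite /OPTcheck; apply: bigmin_le_cond; exact: HOm'.
set s := sort >=%R [seq sw v | v <- enum Lev].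
have Hsz : size s = #|Lev| by rewrite size_sort size_map cardE.
have HMs : (M.-1 < size s)%N by rewrite Hsz; apply: leq_trans hlM; case: (M) hM1.
have HMs' : (M <= size s)%N by rewrite Hsz.
have Hu0 : 0 <= u.
  have : u \in s by apply: mem_nth.
  by rewrite mem_sort => /mapP [v _ ->]; apply: sw_ge0.
have Htot : total (>=%R : rel R) by move=> a b; apply: le_total.
have Htr : transitive (>=%R : rel R) by move=> a b c h1 h2; exact: le_trans h2 h1.
have Hsort : sorted >=%R s := sort_sorted Htot _.
have Hcnt : (M <= count (fun y : R => (u <= y)%R) s)%N.
  rewrite -(cat_take_drop M s) count_cat.
  have Hts : size (take M s) = M by rewrite size_takel // Hsz.
  have -> : count (fun y : R => (u <= y)%R) (take M s) = M.
    rewrite -[RHS]Hts; apply/eqP; rewrite -all_count; apply/(all_nthP 0) => i Hi.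
    rewrite Hts in Hi; rewrite nth_take //.
    apply: (sorted_leq_nth Htr (fun a => le_refl a) 0 Hsort); rewrite ?inE //.
      exact: leq_trans Hi HMs'.
    by rewrite -ltnS prednK.
  exact: leq_addr.
have HH : (M <= #|H|)%N.
  move: Hcnt; rewrite count_sort count_map -size_filter.
  have Hu : uniq [seq v <- enum Lev | u <= sw v] by rewrite filter_uniq // enum_uniq.
  rewrite -(card_uniqP Hu) => h; apply: leq_trans h _; rewrite leq_eqVlt; apply/orP; left.
  apply/eqP; apply: eq_card => v; rewrite mem_filter mem_enum !inE; by rewrite andbC.
have Hcost1 : cost x Om' <= cost x Om + u *+ #|D :&: Om|.
  rewrite /cost (bigID (fun w => w \in Om)) /= addrC; apply: lerD.
    rewrite le_eqVlt; apply/orP; left; apply/eqP; apply: eq_bigl => w; rewrite in_setD.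
    by case: (w \in Om); case: (w \in Z).
  apply: (@le_trans _ _ (\sum_(v in D :&: Om) sw v)); last first.
    rewrite -sumr_const; apply: ler_sum => v; rewrite in_setI => /andP [HvD _].
    by move: HvD; rewrite inE => /andP [_ /ltW].
  rewrite /sw /subtree_weight swap_sum big_mkcond /=; apply: ler_sum => w _.
  case: ifP => [/andP [HwZ HwO] | _]; last by apply: sumr_ge0 => *; apply: hx.
  rewrite in_setD HwO andbT negbK in HwZ.
  move: HwZ; rewrite inE => /existsP [v /andP [HvD Hvw]].
  rewrite (bigD1 v) /=; last by rewrite in_setI HvD (anc_closed HO HwO Hvw) Hvw.
  by rewrite lerDl; apply: sumr_ge0 => *; apply: hx.
have Hcost2 : u *+ #|H :\: Om| <= cost x Om.
  apply: (@le_trans _ _ (\sum_(v in H :\: Om) sw v)).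
    rewrite -sumr_const; apply: ler_sum => v; rewrite in_setD inE => /andP [_ /andP [_ h]].
    exact h.
  rewrite /sw /subtree_weight swap_sum /cost [X in _ <= X]big_mkcond /=.
  apply: ler_sum => w _.
  case: (pickP (fun v => (v \in H :\: Om) && desc v w)) => [v0 /andP [Hv0 Hv0w] | Hnone];
    last first.
    by rewrite big_pred0 //; case: ifP => // _; apply: hx.
  have HwO : w \notin Om.
    apply/negP => HwO; move: Hv0; by rewrite in_setD (anc_closed HO HwO Hv0w).
  rewrite HwO (bigD1 v0) /=; last by rewrite Hv0 Hv0w.
  rewrite big1 ?addr0 // => v /andP [/andP [Hv Hvw] Hne].
  exfalso; move/negP: Hne; apply; apply/eqP; apply: same_level_anc Hvw Hv0w.
  move: Hv Hv0; rewrite !in_setD !inE => /andP [_ /andP [/eqP -> _]].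
  by move=> /andP [_ /andP [/eqP -> _]].
have cardD : (#|D :&: Om| <= k)%N.
  exact: leq_trans (subset_leq_card (subsetIr D Om)) Hcard.
have cardH : (M <= #|H :\: Om| + k)%N.
  have h1 := leq_trans (subset_leq_card (subsetIr H Om)) Hcard.
  rewrite cardsD; move: HH h1; set p := #|H|; set q := #|H :&: Om|; lia.
apply: le_trans Hle1 _; apply: le_trans Hcost1 _.
move: cardD cardH Hcost2; set a := #|H :\: Om|; set b := #|D :&: Om| => cardD cardH Hcost2.
set c := cost x Om in Hcost2 *.
have Hb : u *+ b <= u * k%:R.
  rewrite -[u *+ b]mulr_natr; apply: (ler_wpM2l Hu0); by rewrite ler_nat.
have Ha : M%:R <= a%:R + k%:R :> R by rewrite -natrD ler_nat.
have S1 : u * k%:R <= u * (eps * (M%:R - k%:R)) by apply: (ler_wpM2l Hu0); lra.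
have S2 : u * (M%:R - k%:R) <= u *+ a by rewrite -[u *+ a]mulr_natr; apply: (ler_wpM2l Hu0); lra.
have S3 : eps * (u * (M%:R - k%:R)) <= eps * c.
  by apply: (ler_wpM2l (ltW heps)); exact: le_trans S2 Hcost2.
have E : u * (eps * (M%:R - k%:R)) = eps * (u * (M%:R - k%:R)) by ring.
rewrite mulrDl mul1r; apply: lerD; first exact: lexx.
by apply: le_trans Hb _; apply: le_trans S1 _; rewrite E.
Qed.

End Main.

Unset Implicit Arguments.
Set Strict Implicit.

Theorem mainTheorem8 (R : archiRealFieldType) (d : nat) (x : node d -> R)
  (hx : forall v, 0 <= x v) (k K : nat) (hk1 : (1 <= k)%N) (hkK : (k <= K)%N)
  (eps : R) (heps : 0 < eps) (M : nat)
  (hM : (M%:Z = Num.ceil ((1 + eps) * K%:R / eps))%R)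
  (l : nat) (hl1 : (1 <= l)%N) (hld : (l <= d)%N)
  (hlM : (M <= #|[set v : node d | level v == l]|)%N) :
  OPTcheck x k (Zset x l M) <= (1 + eps) * OPT x k.
Proof.
have hMK : (1 + eps) * K%:R <= M%:R * eps.
  rewrite -ler_pdivrMr //; have := ceil_ge ((1 + eps) * K%:R / eps); by rewrite -hM.
have hkK' : k%:R <= K%:R :> R by rewrite ler_nat.
have hk1' : 1 <= k%:R :> R by rewrite (ler_nat R 1).
have hMe : (1 + eps) * k%:R <= eps * M%:R by nra.
have hM2 : (1 < M)%N.
  rewrite -(ltr_nat R); nra.
have hlt : (l < d)%N.
  rewrite ltn_neqAle hld andbT; apply/negP => /eqP El.
  suff : (#|[set v : node d | level v == l]| <= 1)%N by lia.
  apply/card_le1_eqP => v w; rewrite !inE => /eqP Hv /eqP Hw.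
  have Hv' := level_size hl1 Hv; have Hw' := level_size hl1 Hw.
  apply: val_inj; rewrite El subnn in Hv' Hw'.
  by rewrite (size0nil Hv') (size0nil Hw').
rewrite /OPT.
apply: (big_ind (fun y => OPTcheck x k (Zset x l M) <= (1 + eps) * y)).
- have h1 : OPTcheck x k (Zset x l M) <= total_weight x by exact: bigmin_le_id.
  have h2 : 0 <= total_weight x by apply: sumr_ge0 => *; apply: hx.
  nra.
- by move=> y1 y2 h1 h2; case: (leP y1 y2).
- move=> Om HOm; apply: key => //; lia.
Qed.
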